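(* For every signed composition $\alpha=(a_1,\dots,a_k)$ of $n$, $$X_{\{0\}}\cdot\widetilde{S}_\alpha=X^0_{|\alpha|},$$ where the product is taken in $\mathbb{Q}B_n$.
   Context: $B_n$: signed permutations $w=w_1\dots w_n$ (bijections of $\{\pm1,\dots,\pm n\}$ with $w(-i)=-w(i)$), product in $\mathbb{Q}B_n$ given by composition $(uv)(i)=u(v(i))$; values ordered $\cdots<-2<-1<1<2<\cdots$, $w_0=0$; $\mathrm{Des}(w)=\{i\in\{0,\dots,n-1\}:w_i>w_{i+1}\}$; $X_J=\sum_{\mathrm{Des}(w)\subseteq J}w$. So $X_{\{0\}}$ is the sum of all $w$ with $w_1<\dots<w_n$. A signed composition of $n$ is a sequence $\alpha=(a_1,\dots,a_k)$ of nonzero integers with $\sum|a_i|=n$; $|\alpha|=(|a_1|,\dots,|a_k|)$. $\widetilde{S}_\alpha$ is the sum of all $w\in B_n$ such that, on each of the successive intervals of $[n]$ of lengths $|a_1|,\dots,|a_k|$, the entries $w_j$ are increasing and all have the sign of the corresponding $a_i$. For an ordinary composition $\beta=(b_1,\dots,b_h)$ of $n$, with associated subset $J_\beta=\{b_1,b_1+b_2,\dots,b_1+\dots+b_{h-1}\}\subseteq[n-1]$, $X^0_\beta=X_{\{0\}\cup J_\beta}$. *)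

(* Defs.v *)
From mathcomp Require Import all_boot all_order all_algebra all_fingroup.
Set Implicit Arguments. Unset Strict Implicit. Unset Printing Implicit Defensive.
Import Order.TTheory GRing.Theory Num.Theory.
Local Open Scope ring_scope.

(* A signed permutation w of B_n, encoded as (p, s): for 0-based position i,
   the window entry w_{i+1} is  (-1)^(s i) * (p i + 1). *)
Definition SB (n : nat) : finType := ({perm 'I_n} * {ffun 'I_n -> bool})%type.

Definition sbval n (w : SB n) (i : 'I_n) : int :=
  (-1) ^+ (w.2 i) * ((w.1 i).+1 : int).

(* w_i for i in 0..n with the convention w_0 = 0 *)
Definition wext n (w : SB n) (i : nat) : int :=
  nth 0 (0 :: [seq sbval w j | j <- enum 'I_n]) i.

(* Des(w) as a subset of {0,...,n-1} (encoded as {set 'I_n}) *)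
Definition Des n (w : SB n) : {set 'I_n} :=
  [set i : 'I_n | wext w i.+1 < wext w i].

Definition QB n := {ffun SB n -> rat}.

(* product in Q B_n induced by composition (uv)(i) = u(v(i)), with
   u(-j) = -u(j): (uv)_{i} = sign(v_i) * u_{|v_i|}. *)
Definition composes n (w u v : SB n) : bool :=
  [forall i : 'I_n, sbval w i == (-1) ^+ (v.2 i) * sbval u (v.1 i)].

Definition qbmul n (f g : QB n) : QB n :=
  [ffun w => \sum_(u : SB n) \sum_(v : SB n)
               (if composes w u v then f u * g v else 0)].

Definition XJ n (J : {set 'I_n}) : QB n :=
  [ffun w => if Des w \subset J then 1 else 0].

Definition signed_composition (n : nat) (alpha : seq int) : Prop :=
  all (fun a => a != 0) alpha /\ sumn [seq absz a | a <- alpha] = n.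

(* block index of each 0-based position *)
Definition blocks (alpha : seq int) : seq nat :=
  flatten [seq nseq (absz (nth 0 alpha k)) k | k <- iota 0 (size alpha)].

(* S~_alpha : entries increasing inside each block, and of the block's sign *)
Definition Stilde n (alpha : seq int) : QB n :=
  [ffun w =>
     if [forall i : 'I_n,
           ((0 < nth 0 alpha (nth 0%N (blocks alpha) i)) == (0 < sbval w i))]
        && [forall i : 'I_n,
           (nth 0%N (blocks alpha) i == nth 0%N (blocks alpha) i.+1)
             && (i.+1 < n)%N ==> (wext w i.+1 < wext w i.+2)]
     then 1 else 0].

(* J_beta for the ordinary composition |alpha| : partial sums b1, ..., b1+..+b_{h-1} *)
Definition Jabs (alpha : seq int) : seq nat :=
  [seq \sum_(j < k) absz (nth 0 alpha j) | k <- iota 1 (size alpha).-1].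

(* X^0_{|alpha|} = X_{{0} \cup J_{|alpha|}} *)
Definition X0abs n (alpha : seq int) : QB n :=
  XJ [set i : 'I_n | (val i == 0%N) || (val i \in Jabs alpha)].

(* Main.v *)
Require Import Defs.
From mathcomp Require Import all_boot all_order all_algebra all_fingroup.
From mathcomp Require Import zify.
Set Implicit Arguments. Unset Strict Implicit. Unset Printing Implicit Defensive.
Import Order.TTheory GRing.Theory Num.Theory.
Local Open Scope ring_scope.

Definition sv (b : bool) (a : nat) : int := (-1) ^+ b * (Posz a.+1).

Lemma sbvalE n (w : SB n) i : sbval w i = sv (w.2 i) (w.1 i).
Proof. by []. Qed.

Lemma sv_pos b a : (0 < sv b a) = ~~ b.
Proof. case: b; rewrite /sv /= ?expr0 ?expr1 ?mul1r ?mulN1r; lia. Qed.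

Lemma sv_inj b a c d : sv b a = sv c d -> b = c /\ a = d.
Proof.
case: b; case: c; rewrite /sv /= ?expr0 ?expr1 ?mul1r ?mulN1r => h; split => //; lia.
Qed.

Lemma sv_lt b a d : (sv b a < sv b d) = if b then (d < a)%N else (a < d)%N.
Proof. case: b; rewrite /sv /= ?expr0 ?expr1 ?mul1r ?mulN1r; lia. Qed.

Lemma sv_sign (b c : bool) a : (-1) ^+ b * sv c a = sv (b (+) c) a.
Proof. by rewrite /sv mulrA signr_addb. Qed.

Lemma sign_lt (b : bool) (x y : int) :
  ((-1) ^+ b * x < (-1) ^+ b * y) = if b then y < x else x < y.
Proof. case: b; rewrite /= ?expr0 ?expr1 ?mul1r ?mulN1r; lia. Qed.

Lemma card_lt_ord n (j : 'I_n) : #|[set x : 'I_n | (x < j)%N]| = j.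
Proof.
have -> : #|[set x : 'I_n | (x < j)%N]| = count (fun x : 'I_n => (x < j)%N) (enum 'I_n).
  rewrite cardsE cardE /enum_mem size_filter /enum_mem count_filter.
  by apply: eq_count => x; rewrite !inE andbT.
rewrite -(count_map val (fun k => (k < j)%N)) val_enum_ord.
have := ltn_ord j; move: (nat_of_ord j) => m hm.
have hj : (m <= n)%N by apply: ltnW.
rewrite -(subnKC hj) iotaD count_cat add0n.
rewrite (@eq_in_count _ (fun k => (k < m)%N) predT); last first.
  by move=> k; rewrite mem_iota.
rewrite count_predT size_iota.
rewrite (@eq_in_count _ (fun k => (k < m)%N) pred0); last first.
  by move=> k; rewrite mem_iota /= => /andP [h _]; rewrite ltnNge h.
by rewrite count_pred0 addn0.
Qed.
Definition rk n (f : 'I_n -> int) (m : 'I_n) : nat := #|[set x | f x < f m]|.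

Lemma rk_lt n (f : 'I_n -> int) m : (rk f m < n)%N.
Proof.
rewrite /rk -[X in (_ < X)%N]card_ord -cardsT; apply: proper_card.
rewrite properT; apply/eqP => e.
have : m \in [set x | f x < f m] by rewrite e inE.
by rewrite inE ltxx.
Qed.

Lemma rk_mono n (f : 'I_n -> int) a b : f a < f b -> (rk f a < rk f b)%N.
Proof.
move=> hab; apply: proper_card; apply/properP; split.
  apply/subsetP => x; rewrite !inE => h; exact: lt_trans h hab.
by exists a; rewrite !inE ?ltxx.
Qed.

Lemma rk_inj n (f : 'I_n -> int) : injective f -> injective (rk f).
Proof.
move=> fi a b e; case: (ltgtP (f a) (f b)) => h.
- by have := rk_mono h; rewrite e ltnn.
- by have := rk_mono h; rewrite e ltnn.
- exact: fi.
Qed.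

Lemma rk_incr n (f : 'I_n -> int) :
  (forall i j : 'I_n, (i < j)%N -> f i < f j) -> forall j, rk f j = j.
Proof.
move=> hf j; rewrite /rk -[RHS]card_lt_ord; apply: eq_card => x.
rewrite !inE; case: (ltngtP x j) => h.
- by rewrite hf.
- by apply/negbTE; rewrite -leNgt ltW // hf.
- by rewrite (val_inj h) ltxx.
Qed.

Lemma rk_perm n (f : 'I_n -> int) (p : {perm 'I_n}) j :
  rk (fun x => f (p x)) j = rk f (p j).
Proof.
rewrite /rk -[RHS](card_preimset _ (@perm_inj _ p)); apply: eq_card => x; by rewrite !inE.
Qed.

Lemma incr_all n (x : 'I_n -> int) :
  (forall i j : 'I_n, val j = (val i).+1 -> x i < x j) ->
  forall i j : 'I_n, (i < j)%N -> x i < x j.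
Proof.
move=> h i j; move e: (j - i)%N => d.
elim: d i j e => [|d IH] i j e hij; first by lia.
have hi1 : (i.+1 < n)%N by apply: leq_ltn_trans hij (ltn_ord j).
pose i1 := Ordinal hi1.
have h1 : x i < x i1 by apply: h.
case: (ltngtP i1 j) => h2.
- apply: lt_trans h1 _; apply: IH => //=; lia.
- by move: h2; rewrite /= ltnNge hij.
- by have -> : j = i1 by apply: val_inj.
Qed.

Lemma wext_S n (w : SB n) (i : 'I_n) : wext w i.+1 = sbval w i.
Proof. by rewrite /wext /= (nth_map i) ?size_enum_ord // nth_ord_enum. Qed.

Lemma sbval_inj n (w : SB n) : injective (sbval w).
Proof.
move=> i j; rewrite !sbvalE => /sv_inj [_ h].
by apply: (@perm_inj _ w.1); apply: val_inj.
Qed.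

Lemma DesP n (w : SB n) (A : {set 'I_n}) :
  (forall j : 'I_n, val j = 0%N -> j \in A) ->
  (Des w \subset A) <->
  (forall i j : 'I_n, val j = (val i).+1 -> j \notin A -> sbval w i < sbval w j).
Proof.
move=> hA; split.
- move=> /subsetP hs i j hij hj.
  case: (ltgtP (sbval w i) (sbval w j)) => // h.
  + have : j \in Des w by rewrite inE hij !wext_S -hij wext_S.
    by move/hs; rewrite (negbTE hj).
  + have := congr1 val (sbval_inj h); move=> e; exfalso; lia.
- move=> h; apply/subsetP => j; rewrite inE.
  case e: (val j) => [|k]; first by move=> _; apply: hA.
  have hk : (k < n)%N by rewrite -e; exact: ltnW (ltn_ord j).
  pose i := Ordinal hk.
  rewrite (_ : k.+2 = (val j).+1); last by rewrite e.
  rewrite (_ : k.+1 = (val i).+1) // !wext_S => hlt.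
  apply/negPn/negP => hj.
  have := h i j e hj.
  by rewrite ltNge (ltW hlt).
Qed.

Definition vinv n (u w : SB n) : SB n :=
  let p := (w.1 * u.1^-1)%g in (p, [ffun i => w.2 i (+) u.2 (p i)]).

Lemma vinv1 n (u w : SB n) i : (vinv u w).1 i = u.1^-1%g (w.1 i).
Proof. by rewrite /vinv /= permM. Qed.

Lemma vinv2 n (u w : SB n) i : (vinv u w).2 i = w.2 i (+) u.2 ((vinv u w).1 i).
Proof. by rewrite /vinv /= ffunE. Qed.

Lemma sbval_vinv n (u w : SB n) i :
  sbval w i = (-1) ^+ ((vinv u w).2 i) * sbval u ((vinv u w).1 i).
Proof.
rewrite !sbvalE sv_sign vinv2 -addbA addbb addbF vinv1 permKV //.
Qed.

Lemma composes_vinv n (u w : SB n) : composes w u (vinv u w).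
Proof. by apply/forallP => i; rewrite -sbval_vinv. Qed.

Lemma composes_eq n (w u v : SB n) : composes w u v -> v = vinv u w.
Proof.
move/forallP => h.
have h' : forall i, w.1 i = u.1 (v.1 i) /\ w.2 i = v.2 i (+) u.2 (v.1 i).
  move=> i; move/eqP: (h i); rewrite !sbvalE sv_sign => /sv_inj [e1 e2].
  by split => //; apply: val_inj.
case: v h h' => p s h h' /=.
rewrite /vinv; congr pair.
  by apply/permP => i; rewrite permM (proj1 (h' i)) /= permK.
apply/ffunP => i; rewrite ffunE permM (proj1 (h' i)) /= permK (proj2 (h' i)) /=.
by rewrite -addbA addbb addbF.
Qed.

Definition incr n (u : SB n) : Prop :=
  forall i j : 'I_n, val j = (val i).+1 -> sbval u i < sbval u j.

Definition blk n (E : nat -> bool) (w : SB n) : Prop :=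
  forall i j : 'I_n, val j = (val i).+1 -> E (val i) -> sbval w i < sbval w j.

Definition St n (Pn E : nat -> bool) (v : SB n) : Prop :=
  (forall i : 'I_n, v.2 i = ~~ Pn (val i)) /\ blk E v.

Lemma L1 n (Pn E : nat -> bool) (hPE : forall k, E k -> Pn k = Pn k.+1)
  (u w : SB n) : incr u -> St Pn E (vinv u w) -> blk E w.
Proof.
move=> hu [hs hb] i j hij hE.
have hall := incr_all hu.
rewrite !(sbval_vinv u w) !hs hij -(hPE _ hE) sign_lt.
have := hb i j hij hE; rewrite !sbvalE !hs hij -(hPE _ hE) sv_lt.
by case: (Pn i) => /= h; apply: hall.
Qed.

Definition sig n (Pn : nat -> bool) (w : SB n) (m : 'I_n) : bool :=
  w.2 (w.1^-1%g m) (+) ~~ Pn (val (w.1^-1%g m)).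

Definition vs n (Pn : nat -> bool) (w : SB n) (m : 'I_n) : int := sv (sig Pn w m) m.

Lemma vs_inj n Pn (w : SB n) : injective (vs Pn w).
Proof. by move=> a b /sv_inj [_ h]; apply: val_inj. Qed.

Definition Rf n Pn (w : SB n) (m : 'I_n) : 'I_n := Ordinal (rk_lt (vs Pn w) m).

Lemma Rf_inj n Pn (w : SB n) : injective (Rf Pn w).
Proof.
move=> a b e; apply: (rk_inj (@vs_inj n Pn w)); exact: (congr1 val e).
Qed.

Definition Rp n Pn (w : SB n) : {perm 'I_n} := perm (@Rf_inj n Pn w).

Definition u0 n Pn (w : SB n) : SB n :=
  ((Rp Pn w)^-1%g, [ffun j => sig Pn w ((Rp Pn w)^-1%g j)]).

Lemma sbval_u0 n Pn (w : SB n) j : sbval (u0 Pn w) j = vs Pn w ((Rp Pn w)^-1%g j).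
Proof. by rewrite sbvalE /u0 /= ffunE. Qed.

Lemma vs_w n Pn (w : SB n) i :
  vs Pn w (w.1 i) = (-1) ^+ (~~ Pn (val i)) * sbval w i.
Proof. by rewrite /vs /sig permK sbvalE sv_sign addbC. Qed.

Lemma Lexist n (Pn E : nat -> bool) (hPE : forall k, E k -> Pn k = Pn k.+1)
  (w : SB n) : blk E w -> incr (u0 Pn w) /\ St Pn E (vinv (u0 Pn w) w).
Proof.
move=> hw; split.
  move=> i j hij; rewrite !sbval_u0.
  set a := (Rp Pn w)^-1%g i; set b := (Rp Pn w)^-1%g j.
  have ha : rk (vs Pn w) a = i.
    by have := congr1 val (permKV (Rp Pn w) i); rewrite permE.
  have hb : rk (vs Pn w) b = j.
    by have := congr1 val (permKV (Rp Pn w) j); rewrite permE.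
  case: (ltgtP (vs Pn w a) (vs Pn w b)) => // h.
  - by have := rk_mono h; rewrite ha hb hij /=; lia.
  - by move/vs_inj: h => h; move: hb; rewrite -h ha hij /=; lia.
have hv1 : forall i, (vinv (u0 Pn w) w).1 i = Rp Pn w (w.1 i).
  by move=> i; rewrite vinv1 /u0 /= invgK.
have hv2 : forall i : 'I_n, (vinv (u0 Pn w) w).2 i = ~~ Pn (val i).
  move=> i; rewrite vinv2 hv1 /u0 /= ffunE permK /sig permK.
  by rewrite addbA addbb.
split => // i j hij hE.
rewrite !sbvalE !hv2 !hv1 hij -(hPE _ hE) sv_lt !permE /=.
have h := hw i j hij hE.
case hP: (Pn i) => /=; apply: rk_mono; rewrite !vs_w hij -(hPE _ hE) hP /=.
  by rewrite !expr0 !mul1r.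
by rewrite !expr1 !mulN1r; move: h; lia.
Qed.

Lemma Luniq n (Pn E : nat -> bool) (u w : SB n) :
  incr u -> St Pn E (vinv u w) -> u = u0 Pn w.
Proof.
move=> hu [hs _].
have h2 : forall j, u.2 j = sig Pn w (u.1 j).
  move=> j; set i := w.1^-1%g (u.1 j).
  have hv : (vinv u w).1 i = j by rewrite vinv1 /i permKV permK.
  have := hs i; rewrite vinv2 hv => e.
  rewrite /sig -/i -e addbA addbb //.
have hval : forall j, sbval u j = vs Pn w (u.1 j).
  by move=> j; rewrite sbvalE h2.
have hr : forall j, Rp Pn w (u.1 j) = j.
  move=> j; apply: val_inj; rewrite permE /=.
  rewrite -(rk_perm (vs Pn w) u.1) -[RHS](rk_incr (incr_all hu) j).
  by rewrite /rk; apply: eq_card => x; rewrite !inE !hval.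
have h1 : u.1 = (Rp Pn w)^-1%g.
  by apply/permP => j; rewrite -{2}(hr j) permK.
case: u hu hs h2 hval hr h1 => p s /= hu hs h2 hval hr h1.
rewrite /u0; congr pair => //.
by apply/ffunP => j; rewrite ffunE h2 h1.
Qed.

Lemma blocks_cons (a : int) al :
  blocks (a :: al) = nseq (absz a) 0%N ++ map S (blocks al).
Proof.
rewrite /blocks /= -[1%N]addn0 iotaDl -map_comp map_flatten -map_comp.
congr (_ ++ flatten _); apply: eq_map => k /=.
by rewrite map_nseq.
Qed.

Lemma size_blocks al : size (blocks al) = sumn [seq absz a | a <- al].
Proof.
elim: al => [|a al IH]; first by [].
by rewrite blocks_cons size_cat size_nseq size_map IH.
Qed.

Lemma Jabs_cons (a b : int) al :
  Jabs (a :: b :: al) = absz a :: map (addn (absz a)) (Jabs (b :: al)).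
Proof.
rewrite /Jabs /= big_ord1; congr cons.
rewrite -[2%N]/(1 + 1)%N iotaDl -!map_comp; apply: eq_map => k /=.
by rewrite big_ord_recl.
Qed.

Lemma L0 al : all (fun a : int => a != 0) al -> forall i : nat,
  (i.+1 < sumn [seq absz a | a <- al])%N ->
  (i.+1 \in Jabs al) = (nth 0%N (blocks al) i != nth 0%N (blocks al) i.+1).
Proof.
elim: al => [|a al IH] //= /andP [ha hal] i.
have hm : (0 < absz a)%N by rewrite absz_gt0.
rewrite blocks_cons -size_blocks.
case: al IH hal => [|b al] IH hal.
  by move=> hi; rewrite /Jabs /= cats0 !nth_nseq !if_same.
move=> hi; rewrite Jabs_cons in_cons !nth_cat size_nseq.
set B := blocks (b :: al); set m := absz a.
move: hi; rewrite -/B -/m => hi.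
have hB : size B = sumn [seq absz x | x <- b :: al] by rewrite size_blocks.
case: (ltngtP i.+1 m) => h.
- rewrite !nth_nseq !if_same eqxx orFb.
  by apply/negbTE/mapP => [[x _ e]]; move: h e; clearbody m; lia.
- have hiB : (i.+1 - m < size B)%N by move: hi; clearbody m B; lia.
  rewrite !(nth_map 0%N) //; last by lia.
  rewrite orFb (_ : i.+1 = m + (i - m).+1)%N; last by lia.
  rewrite mem_map; last exact: addnI.
  rewrite IH //; last by rewrite -hB; move: hi; clearbody m B; lia.
  by rewrite (_ : (m + (i - m).+1 - m)%N = (i - m).+1) //; lia.
- have hB0 : (0 < size B)%N by move: hi; rewrite -h; clearbody m B; lia.
  by rewrite h subnn nth_nseq if_same (nth_map 0%N).
Qed.

Definition Pa (alpha : seq int) (k : nat) : bool :=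
  0 < nth 0 alpha (nth 0%N (blocks alpha) k).
Definition Ea (alpha : seq int) (k : nat) : bool :=
  nth 0%N (blocks alpha) k == nth 0%N (blocks alpha) k.+1.

Lemma PEa alpha k : Ea alpha k -> Pa alpha k = Pa alpha k.+1.
Proof. by rewrite /Ea /Pa => /eqP ->. Qed.

Definition stb n (alpha : seq int) (w : SB n) : bool :=
  [forall i : 'I_n,
           ((0 < nth 0 alpha (nth 0%N (blocks alpha) i)) == (0 < sbval w i))]
        && [forall i : 'I_n,
           (nth 0%N (blocks alpha) i == nth 0%N (blocks alpha) i.+1)
             && (i.+1 < n)%N ==> (wext w i.+1 < wext w i.+2)].

Lemma StildeE n alpha (v : SB n) : Stilde n alpha v = if stb alpha v then 1 else 0.
Proof. by rewrite ffunE. Qed.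

Lemma stbP n alpha (v : SB n) : stb alpha v <-> St (Pa alpha) (Ea alpha) v.
Proof.
split.
- case/andP => /forallP h1 /forallP h2; split.
    move=> i; move/eqP: (h1 i); rewrite sbvalE sv_pos /Pa => ->.
    by rewrite negbK.
  move=> i j hij hE.
  have hij' : nat_of_ord j = (nat_of_ord i).+1 := hij.
  have hn : (i.+1 < n)%N by rewrite -hij' ltn_ord.
  have hE' : (nth 0%N (blocks alpha) i == nth 0%N (blocks alpha) i.+1) := hE.
  have := h2 i; rewrite hE' hn /= wext_S.
  by rewrite (_ : (i.+2 = (nat_of_ord j).+1)%N) ?wext_S // hij'.
- move=> [h1 h2]; apply/andP; split.
    apply/forallP => i; rewrite sbvalE sv_pos h1 negbK //.
  apply/forallP => i; apply/implyP => /andP [hE hn].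
  pose j := Ordinal hn.
  rewrite wext_S (_ : (i.+2 = (val j).+1)%N) ?wext_S //.
  exact: h2.
Qed.

Lemma XJE n (A : {set 'I_n}) (u : SB n) : XJ A u = if Des u \subset A then 1 else 0.
Proof. by rewrite ffunE. Qed.

Lemma A0P n (u : SB n) : Des u \subset [set i : 'I_n | val i == 0%N] <-> incr u.
Proof.
rewrite DesP; last by move=> j hj; rewrite inE hj.
split => h i j hij; first by apply: h => //; rewrite inE hij.
by move=> _; apply: h.
Qed.

Lemma AJP n alpha (w : SB n) : signed_composition n alpha ->
  Des w \subset [set i : 'I_n | (val i == 0%N) || (val i \in Jabs alpha)]
  <-> blk (Ea alpha) w.
Proof.
move=> [hnz hsum].
rewrite DesP; last by move=> j hj; rewrite inE hj.
have key : forall i j : 'I_n, val j = (val i).+1 ->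
   (j \notin [set i : 'I_n | (val i == 0%N) || (val i \in Jabs alpha)]) = Ea alpha i.
  move=> i j hij; rewrite inE hij /= L0 //; first by rewrite negbK.
  by rewrite hsum -hij ltn_ord.
split => h i j hij.
  by rewrite -(key i j hij); apply: h.
by rewrite (key i j hij); apply: h.
Qed.

Theorem proposition7p6 (n : nat) (alpha : seq int) :
  signed_composition n alpha ->
  qbmul (XJ [set i : 'I_n | val i == 0%N]) (Stilde n alpha) = X0abs n alpha.
Proof.
move=> hsc.
apply/ffunP => w; rewrite ffunE.
set A0 := [set i : 'I_n | val i == 0%N].
rewrite (eq_bigr (fun u => XJ A0 u * Stilde n alpha (vinv u w))); last first.
  move=> u _; rewrite (bigD1 (vinv u w)) // composes_vinv big1.
    by rewrite /= addr0.
  move=> v hv; case: ifP => // /composes_eq e.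
  by move: hv; rewrite e eqxx.
rewrite /X0abs XJE.
case: ifP => hD.
- have hb : blk (Ea alpha) w by apply/(AJP w hsc); rewrite hD.
  have [hi hs] := Lexist (@PEa alpha) hb.
  rewrite (bigD1 (u0 (Pa alpha) w)) //= XJE StildeE.
  have -> : Des (u0 (Pa alpha) w) \subset A0 by apply/A0P.
  have -> : stb alpha (vinv (u0 (Pa alpha) w) w) by apply/stbP.
  rewrite mulr1 big1 ?addr0 // => u hu.
  rewrite XJE StildeE.
  case: ifP => hd; last by rewrite mul0r.
  case: ifP => hst; last by rewrite mulr0.
  move/A0P: hd => hd; move/stbP: hst => hst.
  by rewrite (Luniq hd hst) eqxx in hu.
- apply: big1 => u _; rewrite XJE StildeE.
  case: ifP => hd; last by rewrite mul0r.
  case: ifP => hst; last by rewrite mulr0.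
  move/A0P: hd => hd; move/stbP: hst => hst.
  have hb := L1 (@PEa alpha) hd hst.
  by move/(AJP w hsc): hb; rewrite hD.
Qed.
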